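(* Let $$d=s^6-(3+3i)s^5+3is^4+(4-4i)s^3+3s^2+(3+3i)s+i,\qquad d'=s^6-(3-3i)s^5-3is^4+(4+4i)s^3+3s^2+(3-3i)s-i$$ (so $d'(s)=\overline{d(\overline s)}$), and $$y=-\frac{(1+i)(s^2-1)(s^2+2is+1)(s^2-2is+1)^2\,d'}{8s(s^2+i)(s^2-i)^2\,d},\qquad t=\frac{(s^2-1)^2(s^4+6s^2+1)^3}{32s^2(s^4+1)^3}.$$ Then $y(t)$ is a solution of $\mathrm{P}_{\mathrm{VI}}$ with parameters $(\theta_1,\theta_2,\theta_3,\theta_4)=(3/8,3/8,3/8,5/8)$.
   Context: $\mathrm{P}_{\mathrm{VI}}$ is the equation $$\frac{d^2y}{dt^2}=\frac12\Big(\frac1y+\frac1{y-1}+\frac1{y-t}\Big)\Big(\frac{dy}{dt}\Big)^2-\Big(\frac1t+\frac1{t-1}+\frac1{y-t}\Big)\frac{dy}{dt}+\frac{y(y-1)(y-t)}{t^2(t-1)^2}\Big(\alpha+\beta\frac{t}{y^2}+\gamma\frac{t-1}{(y-1)^2}+\delta\frac{t(t-1)}{(y-t)^2}\Big),$$ with $\alpha=(\theta_4-1)^2/2$, $\beta=-\theta_1^2/2$, $\gamma=\theta_3^2/2$, $\delta=(1-\theta_2^2)/2$. When $y,t$ are given as rational functions of a parameter on a curve, derivatives with respect to $t$ are computed via the chain rule. Here $i=\sqrt{-1}$. *)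

(* Defs.v *)
From HB Require Import structures.
From mathcomp Require Import all_boot all_order all_algebra all_field.
Set Implicit Arguments. Unset Strict Implicit. Unset Printing Implicit Defensive.
Import Order.TTheory GRing.Theory Num.Theory.
Local Open Scope ring_scope.

(* A rational function of the parameter s, represented as numerator/denominator. *)
Definition ratfn := ({poly algC} * {poly algC})%type.

Definition reval (f : ratfn) (s : algC) : algC := f.1.[s] / f.2.[s].
Definition rdefined (f : ratfn) (s : algC) : bool := f.2.[s] != 0.

Definition rderiv (f : ratfn) : ratfn :=
  (f.1^`() * f.2 - f.1 * f.2^`(), f.2 * f.2).
Definition rdiv (f g : ratfn) : ratfn := (f.1 * g.2, f.2 * g.1).

(* chain rule: d/dt of f, where t = t(s) *)
Definition ddt (t f : ratfn) : ratfn := rdiv (rderiv f) (rderiv t).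

(* Painleve VI equation at a point, with y' = dy/dt = y1, y'' = y2 *)
Definition PVI (th1 th2 th3 th4 : algC) (t y y1 y2 : algC) : Prop :=
  let alpha := (th4 - 1) ^+ 2 / 2 in
  let beta := - th1 ^+ 2 / 2 in
  let gamma := th3 ^+ 2 / 2 in
  let delta := (1 - th2 ^+ 2) / 2 in
  y2 = 2^-1 * (y^-1 + (y - 1)^-1 + (y - t)^-1) * y1 ^+ 2
       - (t^-1 + (t - 1)^-1 + (y - t)^-1) * y1
       + y * (y - 1) * (y - t) / (t ^+ 2 * (t - 1) ^+ 2)
         * (alpha + beta * t / y ^+ 2 + gamma * (t - 1) / (y - 1) ^+ 2
            + delta * t * (t - 1) / (y - t) ^+ 2).

Definition d_pol : {poly algC} :=
  'X^6 - (3 + 3 * 'i) *: 'X^5 + (3 * 'i) *: 'X^4 + (4 - 4 * 'i) *: 'X^3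
  + 3 *: 'X^2 + (3 + 3 * 'i) *: 'X + ('i)%:P.
Definition d'_pol : {poly algC} :=
  'X^6 - (3 - 3 * 'i) *: 'X^5 - (3 * 'i) *: 'X^4 + (4 + 4 * 'i) *: 'X^3
  + 3 *: 'X^2 + (3 - 3 * 'i) *: 'X - ('i)%:P.

Definition y_fn : ratfn :=
  ( - ((1 + 'i) *: (('X^2 - 1) * ('X^2 + (2 * 'i) *: 'X + 1)
        * ('X^2 - (2 * 'i) *: 'X + 1) ^+ 2 * d'_pol)),
    8 *: ('X * ('X^2 + ('i)%:P) * ('X^2 - ('i)%:P) ^+ 2 * d_pol) ).

Definition t_fn : ratfn :=
  ( ('X^2 - 1) ^+ 2 * ('X^4 + 6 *: 'X^2 + 1) ^+ 3,
    32 *: ('X^2 * ('X^4 + 1) ^+ 3) ).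

(* Main.v *)
Require Import Defs.
From mathcomp Require Import all_boot all_order all_algebra all_field.
From Stdlib Require Import ZArith.
From mathcomp.zify Require Import ssrZ.
From mathcomp Require Import ring.
Import GRing.Theory Num.Theory.
Local Open Scope ring_scope.


Definition Zr (z : Z) : algC := (int_of_Z z)%:~R.
Lemma ZrD a b : Zr (Z.add a b) = Zr a + Zr b.
Proof. by rewrite /Zr -intrD -(raddfD int_of_Z). Qed.
Lemma ZrM a b : Zr (Z.mul a b) = Zr a * Zr b.
Proof. by rewrite /Zr -intrM -(rmorphM int_of_Z). Qed.
Lemma ZrN a : Zr (Z.opp a) = - Zr a.
Proof. by rewrite /Zr -intrN -(raddfN int_of_Z). Qed.
Lemma ZrB a b : Zr (Z.sub a b) = Zr a - Zr b.
Proof. by rewrite /Zr -intrB -(raddfB int_of_Z). Qed.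
Lemma Zr0 : Zr 0%Z = 0. Proof. by []. Qed.

Definition phi (c : Z * Z) : algC := Zr c.1 + Zr c.2 * 'i.
Definition cadd (x y : Z * Z) : Z * Z := (Z.add x.1 y.1, Z.add x.2 y.2).
Definition cmul (x y : Z * Z) : Z * Z :=
  (Z.sub (Z.mul x.1 y.1) (Z.mul x.2 y.2), Z.add (Z.mul x.1 y.2) (Z.mul x.2 y.1)).
Definition copp (x : Z * Z) : Z * Z := (Z.opp x.1, Z.opp x.2).

Lemma phiD x y : phi (cadd x y) = phi x + phi y.
Proof. rewrite /phi /cadd /= !ZrD; ring. Qed.
Lemma phiN x : phi (copp x) = - phi x.
Proof. rewrite /phi /copp /= !ZrN; ring. Qed.
Lemma sqrtCi2 : ('i : algC) ^+ 2 = -1.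
Proof. exact: sqrCi. Qed.
Lemma phiM x y : phi (cmul x y) = phi x * phi y.
Proof.
rewrite /phi /cmul /= ZrB !ZrD !ZrM.
have H := sqrtCi2. ring: H.
Qed.

Fixpoint geval (l : seq (Z * Z)) (s : algC) : algC :=
  if l is c :: l' then phi c + s * geval l' s else 0.
Fixpoint gadd (l1 l2 : seq (Z * Z)) : seq (Z * Z) :=
  match l1, l2 with
  | [::], _ => l2
  | _, [::] => l1
  | a :: r, b :: t => cadd a b :: gadd r t
  end.
Definition gscale c (l : seq (Z * Z)) := map (cmul c) l.
Fixpoint gmul (l1 l2 : seq (Z * Z)) : seq (Z * Z) :=
  if l1 is a :: r then gadd (gscale a l2) ((0, 0)%Z :: gmul r l2) else [::].
Definition gopp (l : seq (Z * Z)) := map copp l.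
Definition gc (n : Z) : seq (Z * Z) := [:: (n, 0)%Z].

Lemma gevalD l1 l2 s : geval (gadd l1 l2) s = geval l1 s + geval l2 s.
Proof.
elim: l1 l2 => [|a r IH] [|b t] /=; rewrite ?addr0 ?add0r //.
by rewrite phiD IH; ring.
Qed.
Lemma gevalS c l s : geval (gscale c l) s = phi c * geval l s.
Proof. elim: l => [|a r IH] /=; rewrite ?mulr0 // phiM IH; ring. Qed.
Lemma gevalM l1 l2 s : geval (gmul l1 l2) s = geval l1 s * geval l2 s.
Proof.
elim: l1 => [|a r IH] /=; rewrite ?mul0r //.
rewrite gevalD gevalS /= IH /phi /= Zr0; ring.
Qed.
Lemma gevalN l s : geval (gopp l) s = - geval l s.
Proof. elim: l => [|a r IH] /=; rewrite ?oppr0 // phiN IH; ring. Qed.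
Lemma gevalC n s : geval (gc n) s = phi (n, 0%Z).
Proof. by rewrite /= mulr0 addr0. Qed.

Definition is0 (l : seq (Z * Z)) := all (fun c => Z.eqb c.1 0 && Z.eqb c.2 0) l.
Lemma geval0 l s : is0 l -> geval l s = 0.
Proof.
elim: l => [|[a b] r IH] //= /andP[/andP[/Z.eqb_spec -> /Z.eqb_spec ->] /IH ->].
by rewrite /phi /= Zr0; ring.
Qed.
Definition Kgen10 {T : Type} (add mul : T -> T -> T) (neg : T -> T) (c : Z -> T) (u w p q e f a b a2 b2 : T) : T :=
  let U1 := (add u (neg w)) in
  let W := (add (mul u q) (neg (mul p w))) in
  let P1 := (add p (neg q)) in
  let L := (add (mul (mul (add (mul a2 w) (neg (mul (mul (c 2%Z) a) e))) b) q) (neg (mul (mul a (add (mul b2 q) (neg (mul (mul (c 2%Z) b) f)))) w))) in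
  let N1 := (add (add (mul U1 W) (mul u W)) (mul (mul q u) U1)) in
  let N2 := (add (add (mul P1 W) (mul p W)) (mul (mul w p) P1)) in
  let Br := (add (add (add (mul (mul (mul (mul (mul (mul (mul (c 9%Z) q) u) u) U1) U1) W) W) (neg (mul (mul (mul (mul (mul (mul (mul (c 9%Z) p) w) w) U1) U1) W) W))) (mul (mul (mul (mul (mul (mul (mul (c 9%Z) P1) w) w) u) u) W) W)) (mul (mul (mul (mul (mul (mul (mul (mul (mul (c 55%Z) p) P1) w) w) q) u) u) U1) U1)) in
  let T1 := (mul (mul (mul (mul (mul (mul (mul (mul (mul (c 2%Z) q) p) p) P1) P1) u) U1) W) L) in
  let T2 := (mul (mul (mul (mul (mul (mul (mul (mul (mul N1 a) a) b) q) q) p) p) P1) P1) in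
  let T3 := (mul (mul (mul (mul (mul (mul (mul (mul (mul (mul (c 2%Z) N2) a) b) b) w) q) p) P1) u) U1) in
  (add (mul (c 128%Z) (add (add T1 (neg T2)) T3)) (neg (mul (mul (mul (mul (c 2%Z) Br) b) b) b))).

Definition Kgen12 {T : Type} (add mul : T -> T -> T) (neg : T -> T) (c : Z -> T)
  (ny0 ny1 ny2 dy0 dy1 dy2 nt0 nt1 nt2 dt0 dt1 dt2 : T) : T :=
  Kgen10 add mul neg c ny0 dy0 nt0 dt0 dy1 dt1
    (add (mul ny1 dy0) (neg (mul ny0 dy1))) (add (mul nt1 dt0) (neg (mul nt0 dt1)))
    (add (mul ny2 dy0) (neg (mul ny0 dy2))) (add (mul nt2 dt0) (neg (mul nt0 dt2))).


Definition cz (n : Z) : algC := Zr n.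
Definition LNy0 : seq (Z*Z) := [:: (1, (-1))%Z; (4, (-2))%Z; (9, (-15))%Z; (32, (-8))%Z; (37, (-45))%Z; (28, 22)%Z; (93, 61)%Z; ((-128), 0)%Z; ((-93), 61)%Z; (28, (-22))%Z; ((-37), (-45))%Z; (32, 8)%Z; ((-9), (-15))%Z; (4, 2)%Z; ((-1), (-1))%Z].
Definition LDy0 : seq (Z*Z) := [:: (0, 0)%Z; (8, 0)%Z; (24, (-24))%Z; (0, (-16))%Z; ((-8), (-8))%Z; (56, 0)%Z; (32, (-32))%Z; (0, 0)%Z; ((-32), (-32))%Z; (56, 0)%Z; (8, (-8))%Z; (0, 16)%Z; ((-24), (-24))%Z; (8, 0)%Z].
Definition LNt0 : seq (Z*Z) := [:: (1, 0)%Z; (0, 0)%Z; (16, 0)%Z; (0, 0)%Z; (76, 0)%Z; (0, 0)%Z; (48, 0)%Z; (0, 0)%Z; ((-282), 0)%Z; (0, 0)%Z; (48, 0)%Z; (0, 0)%Z; (76, 0)%Z; (0, 0)%Z; (16, 0)%Z; (0, 0)%Z; (1, 0)%Z].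
Definition LDt0 : seq (Z*Z) := [:: (0, 0)%Z; (0, 0)%Z; (32, 0)%Z; (0, 0)%Z; (0, 0)%Z; (0, 0)%Z; (96, 0)%Z; (0, 0)%Z; (0, 0)%Z; (0, 0)%Z; (96, 0)%Z; (0, 0)%Z; (0, 0)%Z; (0, 0)%Z; (32, 0)%Z].


Lemma gevalCz n s : geval (gc n) s = cz n.
Proof. by rewrite /= mulr0 addr0 /phi /= Zr0 mul0r addr0. Qed.

Lemma Kgen12_geval l1 l2 l3 l4 l5 l6 l7 l8 l9 l10 l11 l12 s :
  Kgen12 +%R *%R (fun x => - x) cz (geval l1 s) (geval l2 s) (geval l3 s)
    (geval l4 s) (geval l5 s) (geval l6 s) (geval l7 s) (geval l8 s)
    (geval l9 s) (geval l10 s) (geval l11 s) (geval l12 s) =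
  geval (Kgen12 gadd gmul gopp gc l1 l2 l3 l4 l5 l6 l7 l8 l9 l10 l11 l12) s.
Proof.
cbv beta zeta delta [Kgen12 Kgen10].
by rewrite !(gevalD, gevalM, gevalN, gevalCz).
Qed.

Definition gP (l : seq (Z * Z)) : {poly algC} := Poly (map phi l).

Lemma gP_ev l x : (gP l).[x] = geval l x.
Proof.
rewrite /gP horner_Poly; elim: l => [|c l IH] //=.
by rewrite IH mulrC addrC.
Qed.

Lemma phi0 : phi (0, 0)%Z = 0.
Proof. by rewrite /phi /= Zr0 mul0r addr0. Qed.

Lemma nth_phi l i : (map phi l)`_i = phi (nth (0, 0)%Z l i).
Proof.
elim: l i => [|c l IH] [|i] //=; by rewrite phi0.
Qed.

Fixpoint gderk (k : nat) (l : seq (Z * Z)) : seq (Z * Z) :=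
  if l is c :: r then cmul (Z.of_nat k, 0%Z) c :: gderk k.+1 r else [::].
Definition gder (l : seq (Z * Z)) := if l is _ :: r then gderk 1 r else [::].

Lemma Zr_nat k : Zr (Z.of_nat k) = k%:R.
Proof.
elim: k => [|k IH] //.
by rewrite Nat2Z.inj_succ -Z.add_1_r ZrD IH mulrS addrC.
Qed.

Lemma phi_nat k c : phi (cmul (Z.of_nat k, 0%Z) c) = phi c *+ k.
Proof.
rewrite phiM /phi /= Zr_nat Zr0 mul0r addr0.
by rewrite mulr_natl.
Qed.

Lemma nth_gderk k l i :
  phi (nth (0, 0)%Z (gderk k l) i) = phi (nth (0, 0)%Z l i) *+ (k + i).
Proof.
elim: l k i => [|c l IH] k [|i] /=; rewrite ?phi0 ?mul0rn ?addn0 ?phi_nat //.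
by rewrite IH addSnnS.
Qed.

Lemma gder_P l : (gP l)^`() = gP (gder l).
Proof.
apply/polyP => i; rewrite coef_deriv /gP !coef_Poly !nth_phi.
case: l => [|c l] /=; first by rewrite nth_nil phi0 mul0rn.
have := nth_gderk 1 l i. rewrite add1n => ->. done.
Qed.

Lemma poly_ext (p q : {poly algC}) : (forall x, p.[x] = q.[x]) -> p = q.
Proof.
move=> H; apply/eqP; rewrite -subr_eq0; apply/eqP.
apply: (@roots_geq_poly_eq0 _ _ [seq i%:R | i <- iota 0 (size (p - q))]).
- apply/allP => x /mapP [i _ ->]; by rewrite /root hornerD hornerN H subrr.
- rewrite map_inj_uniq ?iota_uniq // => i j /eqP.
  by rewrite eqr_nat => /eqP.
- by rewrite size_map size_iota.
Qed.


Lemma LA (u w p q e f a b a2 b2 : algC) :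
  w != 0 -> q != 0 -> u != 0 -> u - w != 0 -> u * q - p * w != 0 ->
  p != 0 -> p - q != 0 -> b != 0 ->
  Kgen10 +%R *%R (fun x => - x) cz u w p q e f a b a2 b2 = 0 ->
  PVI (3/8) (3/8) (3/8) (5/8) (p / q) (u / w) ((a / w^+2) / (b / q^+2))
   ((((a2 * w - 2 * a * e) / w ^+ 3) * (b / q ^+ 2)
     - (a / w ^+ 2) * ((b2 * q - 2 * b * f) / q ^+ 3)) / (b / q ^+ 2) ^+ 3).
Proof.
move=> hw hq hu hU hW hp hP hb HK.
rewrite /PVI. apply/eqP; rewrite -subr_eq0; apply/eqP.
transitivity (Kgen10 +%R *%R (fun x => - x) cz u w p q e f a b a2 b2 * q^+2 /
   (256 * w^+3 * p^+2 * (p-q)^+2 * u * (u-w) * (u*q-p*w) * b^+3)); last first.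
  by rewrite HK !mul0r.
cbv beta zeta delta [Kgen10]. rewrite /cz /Zr.
Time field.
by rewrite hb hW hU hu hP hp hw hq.
Qed.

Lemma gen (Ny Dy Nt Dt : {poly algC}) (s : algC) :
  Kgen12 +%R *%R (fun x => - x) cz Ny.[s] Ny^`().[s] Ny^`()^`().[s]
    Dy.[s] Dy^`().[s] Dy^`()^`().[s] Nt.[s] Nt^`().[s] Nt^`()^`().[s]
    Dt.[s] Dt^`().[s] Dt^`()^`().[s] = 0 ->
  rdefined (Ny, Dy) s -> rdefined (Nt, Dt) s ->
  rdefined (ddt (Nt, Dt) (Ny, Dy)) s -> rdefined (ddt (Nt, Dt) (ddt (Nt, Dt) (Ny, Dy))) s ->
  reval (Nt, Dt) s != 0 -> reval (Nt, Dt) s != 1 ->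
  reval (Ny, Dy) s != 0 -> reval (Ny, Dy) s != 1 -> reval (Ny, Dy) s != reval (Nt, Dt) s ->
  PVI (3 / 8) (3 / 8) (3 / 8) (5 / 8)
      (reval (Nt, Dt) s) (reval (Ny, Dy) s)
      (reval (ddt (Nt, Dt) (Ny, Dy)) s) (reval (ddt (Nt, Dt) (ddt (Nt, Dt) (Ny, Dy))) s).
Proof.
rewrite /Kgen12 /reval /rdefined /ddt /rdiv /rderiv /=.
rewrite !(derivM, derivB, derivD, derivN) !(hornerM, hornerD, hornerN).
set ny0 := Ny.[s]; set ny1 := Ny^`().[s]; set ny2 := Ny^`()^`().[s].
set dy0 := Dy.[s]; set dy1 := Dy^`().[s]; set dy2 := Dy^`()^`().[s].
set nt0 := Nt.[s]; set nt1 := Nt^`().[s]; set nt2 := Nt^`()^`().[s].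
set dt0 := Dt.[s]; set dt1 := Dt^`().[s]; set dt2 := Dt^`()^`().[s].
move=> HK hw hq h1 _ ht0 ht1 hy0 hy1 hyt.
have hb : nt1 * dt0 - nt0 * dt1 != 0 by apply: contraNneq h1 => ->; rewrite mulr0.
have hu : ny0 != 0 by apply: contraNneq hy0 => ->; rewrite mul0r.
have hp : nt0 != 0 by apply: contraNneq ht0 => ->; rewrite mul0r.
have hU : ny0 - dy0 != 0.
  apply: contraNneq hy1 => /subr0_eq ->; by rewrite divff.
have hP : nt0 - dt0 != 0.
  apply: contraNneq ht1 => /subr0_eq ->; by rewrite divff.
have hW : ny0 * dt0 - nt0 * dy0 != 0.
  apply: contraNneq hyt => H0; apply/eqP; apply: subr0_eq.
  have -> : ny0 / dy0 - nt0 / dt0 = (ny0 * dt0 - nt0 * dy0) / (dy0 * dt0).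
    by field; rewrite hw hq.
  by rewrite H0 mul0r.
have E1 : (ny1 * dy0 - ny0 * dy1) * (dt0 * dt0) / (dy0 * dy0 * (nt1 * dt0 - nt0 * dt1))
   = ((ny1 * dy0 - ny0 * dy1) / dy0 ^+ 2) / ((nt1 * dt0 - nt0 * dt1) / dt0 ^+ 2).
  by field; rewrite hb hw hq.
rewrite E1.
set a := ny1 * dy0 - ny0 * dy1.
set b := nt1 * dt0 - nt0 * dt1.
match goal with |- PVI _ _ _ _ _ _ _ ?X => set y2 := X end.
have E2 : y2 = ((((ny2 * dy0 - ny0 * dy2) * dy0 - 2 * a * dy1) / dy0 ^+ 3) * (b / dt0 ^+ 2)
     - (a / dy0 ^+ 2) * (((nt2 * dt0 - nt0 * dt2) * dt0 - 2 * b * dt1) / dt0 ^+ 3))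
     / (b / dt0 ^+ 2) ^+ 3.
    by rewrite /y2 /a /b; field; rewrite hq hb hw.
rewrite E2.
exact: (@LA _ _ _ _ dy1 dt1 _ _ _ _ hw hq hu hU hW hp hP hb HK).
Qed.

Lemma eNy : y_fn.1 = gP LNy0.
Proof.
apply: poly_ext => x; rewrite gP_ev.
rewrite /y_fn /d'_pol /= !hornerE /LNy0 /= /phi /=.
have H := sqrtCi2. rewrite /Zr.
ring: H.
Qed.

Lemma eDy : y_fn.2 = gP LDy0.
Proof.
apply: poly_ext => x; rewrite gP_ev.
rewrite /y_fn /d_pol /= !hornerE /LDy0 /= /phi /=.
have H := sqrtCi2. rewrite /Zr.
ring: H.
Qed.

Lemma eNt : t_fn.1 = gP LNt0.
Proof.
apply: poly_ext => x; rewrite gP_ev.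
rewrite /t_fn /= !hornerE /LNt0 /= /phi /=.
have H := sqrtCi2. rewrite /Zr.
ring: H.
Qed.

Lemma eDt : t_fn.2 = gP LDt0.
Proof.
apply: poly_ext => x; rewrite gP_ev.
rewrite /t_fn /= !hornerE /LDt0 /= /phi /=.
have H := sqrtCi2. rewrite /Zr.
ring: H.
Qed.

Theorem mainTheorem13 (s : algC) :
  rdefined y_fn s -> rdefined t_fn s ->
  rdefined (ddt t_fn y_fn) s -> rdefined (ddt t_fn (ddt t_fn y_fn)) s ->
  reval t_fn s != 0 -> reval t_fn s != 1 ->
  reval y_fn s != 0 -> reval y_fn s != 1 -> reval y_fn s != reval t_fn s ->
  PVI (3 / 8) (3 / 8) (3 / 8) (5 / 8)
      (reval t_fn s) (reval y_fn s)
      (reval (ddt t_fn y_fn) s) (reval (ddt t_fn (ddt t_fn y_fn)) s).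
Proof.
apply: (@gen y_fn.1 y_fn.2 t_fn.1 t_fn.2 s).
rewrite eNy eDy eNt eDt !gder_P !gP_ev Kgen12_geval.
apply: geval0.
Time vm_compute; reflexivity.
Qed.
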